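(* Let $G$ be a finite abelian group of order $N$, and let $e = \exp G$ be the exponent of $G$, that is, the least common multiple of the orders of the elements of $G$. For $1 \leq r \leq N$, define \[D(N, e, r) = \{d_1 d_2 \mid d_1 \in D(N/e),\ d_2 \in D(e),\ d_1 e \geq r\},\] where $D(n)$ denotes the set of positive divisors of $n$. Then for every $1 \le r \le N$, \[\rho_G^-(r) \leq \min_{d \in D(N, e, r)} d \left(2\left\lceil\frac{r}{d}\right\rceil - 1\right).\]
   Context: For a finite abelian group $(G,+)$ of order $N$ and subsets $A, B \subseteq G$, write $A - B = \{a - b \mid a \in A, b \in B\}$. For $1 \le r \le N$ define $\rho^-_G(r) = \min \{|A - A| \mid A \subseteq G, |A| = r\}$. *)

(* Defs.v *)
From mathcomp Require Import all_boot all_order all_algebra all_fingroup all_solvable.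
Set Implicit Arguments. Unset Strict Implicit. Unset Printing Implicit Defensive.
Import GRing.Theory.

Definition diffset (G : finZmodType) (A B : {set G}) : {set G} :=
  [set (a - b)%R | a in A, b in B].

(* rho^-_G(r) = min { |A - A| : A subset G, |A| = r }.
   The neutral element #|G| of the minimum is harmless: |A - A| <= |G|. *)
Definition rho_minus (G : finZmodType) (r : nat) : nat :=
  \big[minn/#|G|]_(A : {set G} | #|A| == r) #|diffset A A|.

Definition expG (G : finZmodType) : nat := exponent [set: (G : finGroupType)].

Definition Dset (N e r : nat) : seq nat :=
  [seq d1 * d2 | d1 <- [seq d <- divisors (N %/ e) | r <= d * e], d2 <- divisors e].

Definition ceil_div (a b : nat) : nat := (a + b - 1) %/ b.

(* min_{d in D(N,e,r)} d (2 ceil(r/d) - 1); D(N,e,r) is nonempty (contains N),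
   so the neutral element (here the value at d = N) does not matter. *)
Definition bound (N e r : nat) : nat :=
  \big[minn/N * (2 * ceil_div r N - 1)]_(d <- Dset N e r) (d * (2 * ceil_div r d - 1)).

(* Main.v *)
Require Import Defs.
From mathcomp Require Import all_boot all_order all_algebra all_fingroup all_solvable.
From mathcomp Require Import zify.
Set Implicit Arguments. Unset Strict Implicit. Unset Printing Implicit Defensive.
Local Open Scope group_scope.
Lemma sub_order d : forall (gT : finGroupType) (G : {group gT}),
  abelian G -> d %| #|G| -> exists H : {group gT}, H \subset G /\ #|H| = d.
Proof.
elim/ltn_ind: d => d IH gT G cG dv.
have d_gt0 : 0 < d by apply: dvdn_gt0 dv.
case: (leqP d 1) => [d1|d_gt1].
  have -> : d = 1%N by apply/eqP; rewrite eqn_leq d1 d_gt0.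
  by exists 1%G; rewrite sub1G cards1.
have pp := pdiv_prime d_gt1.
have pd := pdiv_dvd d.
set p := pdiv d in pp pd.
have pG : p %| #|G| by apply: dvdn_trans dv.
case: (Cauchy pp pG) => y Gy oy.
have sYG : <[y]> \subset G by rewrite cycle_subG.
have nYG : <[y]> <| G by rewrite -sub_abelian_normal.
have cQ : abelian (G / <[y]>) by apply: quotient_abelian.
have cardQ : #|G| = (p * #|G / <[y]>|)%N.
  by rewrite card_quotient ?normal_norm // -oy -(Lagrange sYG).
have dp : d = (p * (d %/ p))%N by rewrite mulnC divnK.
have dv' : d %/ p %| #|G / <[y]>|.
  by rewrite -(@dvdn_pmul2l p) ?prime_gt0 // -dp -cardQ.
have ltd : d %/ p < d by rewrite ltn_Pdiv ?prime_gt1.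
have [L [sLQ oL]] := IH _ ltd _ _ cQ dv'.
exists (coset <[y]> @*^-1 L)%G; split.
  by rewrite sub_cosetpre_quo.
by rewrite card_cosetpre oL -orderE oy -dp.
Qed.
Lemma key (gT : finGroupType) (G : {group gT}) d1 d2 :
  abelian G -> d1 %| #|G| %/ exponent G -> d2 %| exponent G ->
  exists H : {group gT}, exists x,
    [/\ #|H| = (d1 * d2)%N &
      forall m, 0 < m < exponent G %/ d2 -> x ^+ m \notin H].
Proof.
move=> cG dv1 dv2.
have [x Gx ex] := exponent_witness (abelian_nil cG).
set e := exponent G in dv1 dv2 ex *.
have e_gt0 : 0 < e by apply: exponent_gt0.
have /splitsP [K /complP [tiXK defG]] := abelian_splits Gx (esym ex) cG.
have sKG : K \subset G by rewrite -defG mulG_subr.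
have cardK : #|K| = (#|G| %/ e)%N.
  by rewrite -defG TI_cardMg // -orderE -ex mulKn.
have [H1 [sH1K oH1]] : exists H : {group gT}, H \subset K /\ #|H| = d1.
  by apply: sub_order (abelianS sKG cG) _; rewrite cardK.
set a := (e %/ d2)%N.
have ae : a %| e by apply/dvdnP; exists d2; rewrite mulnC divnK.
have d2_gt0 : 0 < d2 by apply: dvdn_gt0 dv2.
have oC2 : #[x ^+ a] = d2.
  by rewrite orderXdiv -ex // /a divnA // mulKn.
set C2 := <[x ^+ a]>%G.
have sC2X : C2 \subset <[x]> by rewrite cycle_subG mem_cycle.
have sC2G : C2 \subset G by rewrite (subset_trans sC2X) // cycle_subG.
have sH1G : H1 \subset G by apply: subset_trans sKG.
have cH1C2 : C2 \subset 'C(H1) by apply: sub_abelian_cent2 cG _ _.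
have tiH : H1 :&: C2 = 1.
  apply/trivgP; rewrite -tiXK setIC; apply: setISS => //.
exists (H1 <*> C2)%G, x; split.
  by rewrite /= cent_joinEr // TI_cardMg // oH1 -orderE oC2.
move=> m /andP [m_gt0 m_lt].
rewrite /= cent_joinEr //; apply/negP => /mulsgP [h c H1h C2c xm].
have h1 : h = 1.
  apply/set1P; have : h \in <[x]> :&: K; last by rewrite tiXK.
  rewrite inE (subsetP sH1K _ H1h) andbT.
  have -> : h = x ^+ m * c^-1 by rewrite xm mulgK.
  by rewrite groupM ?groupV ?mem_cycle // (subsetP sC2X).
move: xm; rewrite h1 mul1g => xm.
case/cycleP: C2c => j cj.
move: xm; rewrite cj -expgM => /eqP; rewrite eq_expg_mod_order -ex => /eqP xm.
have : m %% a = (a * j) %% a by rewrite -(modn_dvdm m ae) xm modn_dvdm.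
by rewrite modn_small // mulnC modnMl => m0; rewrite m0 in m_gt0.
Qed.
Local Close Scope group_scope.
Import GRing.Theory.
Lemma bigmin_le (I : eqType) (s : seq I) (P : pred I) (F : I -> nat) n i :
  i \in s -> P i -> \big[minn/n]_(j <- s | P j) F j <= F i.
Proof.
elim: s => [|a s IH] //=; rewrite inE big_cons => /orP [/eqP <- Pi|si Pi].
  by rewrite Pi geq_minl.
case: (P a); last exact: IH.
by rewrite (leq_trans (geq_minr _ _)) ?IH.
Qed.

Lemma rho_le (G : finZmodType) (A : {set G}) : rho_minus G #|A| <= #|diffset A A|.
Proof.
rewrite /rho_minus; apply: bigmin_le => //; exact: mem_index_enum.
Qed.

Lemma constr (G : finZmodType) (H : {group G}) (x : G) k r :
  (forall m, 0 < m < k -> (x *+ m)%R \notin H) -> 0 < k -> r <= #|H| * k ->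
  rho_minus G r <= #|H| * (2 * k - 1).
Proof.
move=> notin k_gt0 rle.
pose f := fun p : G * 'I_k => (p.1 + x *+ p.2)%R.
set A' := f @: setX H [set: 'I_k].
have cardA' : #|A'| = #|H| * k.
  rewrite card_in_imset ?cardsX ?cardsT ?card_ord //.
  have aux : forall h1 h2 (i j : 'I_k), h1 \in H -> h2 \in H -> i < j ->
      (h1 + x *+ i = h2 + x *+ j)%R -> False.
    move=> h1 h2 i j Hh1 Hh2 ij.
    rewrite -(subnKC (ltnW ij)) GRing.mulrnDr.
    rewrite (GRing.addrA h2) (GRing.addrAC h2) => /GRing.addIr e12.
    have : (x *+ (j - i))%R \in H.
      have -> : (x *+ (j - i))%R = (h1 * h2^-1)%g.
        rewrite e12 /= (GRing.addrC h2); symmetry; exact: GRing.addrK.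
      by rewrite groupM ?groupV.
    by apply/negP/notin; rewrite subn_gt0 ij /= (leq_ltn_trans (leq_subr _ _)).
  move=> [h1 i] [h2 j]; rewrite !inE /= !andbT /f /= => Hh1 Hh2 eq12.
  case: (ltngtP i j) => ij.
  - by case: (aux _ _ _ _ Hh1 Hh2 ij eq12).
  - by case: (aux _ _ _ _ Hh2 Hh1 ij (esym eq12)).
  - have eij : i = j by apply: val_inj.
    by move: eq12; rewrite eij => /GRing.addIr ->.
pose s := take r (enum A').
set A := [set y in s].
have cardA : #|A| = r.
  rewrite cardsE /= (card_uniqP _) ?size_takel //.
    by rewrite -cardE cardA'.
  by rewrite take_uniq ?enum_uniq.
have sAA' : A \subset A'.
  by apply/subsetP => y; rewrite inE => /mem_take; rewrite mem_enum.
pose g := fun p : G * 'I_(2 * k - 1) => (p.1 + x *+ p.2 - x *+ (k - 1))%R.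
have sD : diffset A A \subset g @: setX H [set: 'I_(2 * k - 1)].
  apply/subsetP => z /imset2P [a b /(subsetP sAA') Aa /(subsetP sAA') Ab ->].
  case/imsetP: Aa => [[h1 i]]; rewrite !inE /= andbT => Hh1 ->.
  case/imsetP: Ab => [[h2 j]]; rewrite !inE /= andbT => Hh2 ->.
  have jk : j <= k - 1 by have := ltn_ord j; lia.
  have ik : i <= k - 1 by have := ltn_ord i; lia.
  have lt : i + (k - 1) - j < 2 * k - 1 by lia.
  apply/imsetP; exists ((h1 - h2)%R, Ordinal lt).
    rewrite !inE andbT /=.
    by have : (h1 * h2^-1)%g \in H by rewrite groupM ?groupV.
  rewrite /f /g /= -(addnBA (nat_of_ord i) jk) GRing.mulrnDr.
  rewrite -{2}(subnK jk) GRing.mulrnDr.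
  set y := (x *+ (k - 1 - j))%R; set u := (x *+ i)%R; set v := (x *+ j)%R.
  rewrite (GRing.addrA (h1 - h2)%R u y) (GRing.addrKA y).
  by rewrite (GRing.addrAC h1 (- h2)%R u) (GRing.opprD h2 v) (GRing.addrA (h1 + u)%R).
rewrite -cardA (leq_trans (rho_le A)) // (leq_trans (subset_leq_card sD)) //.
by rewrite (leq_trans (leq_imset_card _ _)) // cardsX cardsT card_ord.
Qed.

Theorem mainTheorem1 (G : finZmodType) (r : nat) :
  1 <= r <= #|G| -> rho_minus G r <= bound #|G| (expG G) r.
Proof.
move=> /andP [r1 rN].
have rhoN : rho_minus G r <= #|G|.
  rewrite /rho_minus; apply: (big_ind (fun y => y <= #|G|)) => //.
  by move=> a b Ha Hb; rewrite geq_min Ha.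
  by move=> A _; apply: max_card.
have e_gt0 : 0 < expG G by apply: exponent_gt0.
have eN : expG G %| #|G| by rewrite /expG -cardsT exponent_dvdn.
have N_gt0 : 0 < #|G| by lia.
have Ne_gt0 : 0 < #|G| %/ expG G by rewrite divn_gt0 // dvdn_leq.
rewrite /bound big_seq; apply: (big_ind (fun y => rho_minus G r <= y)).
- apply: (leq_trans rhoN); rewrite /ceil_div.
  have : 0 < (r + #|G| - 1) %/ #|G| by rewrite divn_gt0 //; lia.
  move=> k1; rewrite -{1}(muln1 #|G|) leq_mul2l; lia.
- by move=> a b Ha Hb; rewrite leq_min Ha Hb.
move=> dd /allpairsP [[d1 d2] [/= d1in d2in ->]].
move: d1in; rewrite mem_filter -dvdn_divisors // => /andP [rd1 d1dv].
move: d2in; rewrite -dvdn_divisors // => d2dv.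
have d1_gt0 : 0 < d1 by apply: dvdn_gt0 d1dv.
have d2_gt0 : 0 < d2 by apply: dvdn_gt0 d2dv.
have d1dv' : d1 %| #|[set: G]| %/ exponent [set: G] by rewrite cardsT.
have [H [x [oH notin]]] := @key _ [set: G]%G d1 d2 (FinRing.zmod_abelian _) d1dv' d2dv.
set d := d1 * d2.
have d_gt0 : 0 < d by rewrite muln_gt0 d1_gt0.
rewrite /ceil_div; set k := (r + d - 1) %/ d.
have k_gt0 : 0 < k by rewrite divn_gt0 //; lia.
have re : r <= (expG G %/ d2) * d.
  by rewrite /d mulnA [_ * d1]mulnC -mulnA divnK.
have kq : k <= expG G %/ d2.
  by rewrite -ltnS ltn_divLR //; rewrite mulSn; lia.
have rk : r <= d * k.
  have := divn_eq (r + d - 1) d; have := ltn_pmod (r + d - 1) d_gt0.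
  rewrite -/k mulnC; lia.
have oH' : #|H| = d := oH.
rewrite -oH'; apply: (@constr G H x) => //.
- move=> m /andP [m0 mk]; apply: notin; rewrite m0 /=.
  exact: leq_trans mk kq.
- by rewrite oH'.
Qed.
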